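(* Let $\Gamma$ be a residually nilpotent group whose abelianization $\Gamma/[\Gamma,\Gamma]$ is finitely generated. Then $\Gamma$ is parafree if and only if there exist a free group $F$ of finite rank and a homomorphism $\varphi:F\to\Gamma$ which induces an isomorphism $P\mathcal{N}i(\varphi):P\mathcal{N}i(F)\to P\mathcal{N}i(\Gamma)$ of true pronilpotent completions.
   Context: The lower central series is $C^1(\Gamma)=\Gamma$, $C^{j+1}(\Gamma)=[\Gamma,C^j(\Gamma)]$. A group $\Gamma$ is parafree if it is residually nilpotent and there exists a free group $F$ such that $F/C^j(F)$ and $\Gamma/C^j(\Gamma)$ are isomorphic for all $j\ge1$. For a group $H$, the true pronilpotent completion $P\mathcal{N}i(H)$ is the completion of $H/\bigcap N$ for the topology whose basis of neighbourhoods of the identity consists of the images of the normal subgroups $N$ with $H/N$ nilpotent; equivalently $\varprojlim H/N$ over such $N$. A homomorphism $\varphi:H\to K$ induces a continuous homomorphism $P\mathcal{N}i(\varphi):P\mathcal{N}i(H)\to P\mathcal{N}i(K)$. *)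

(* Defs.v *)
From Stdlib Require Import List.

Record grp := Grp {
  carrier :> Type;
  gmul : carrier -> carrier -> carrier;
  gone : carrier;
  ginv : carrier -> carrier;
  gmulA : forall x y z, gmul x (gmul y z) = gmul (gmul x y) z;
  gmul1l : forall x, gmul gone x = x;
  gmul1r : forall x, gmul x gone = x;
  gmulVl : forall x, gmul (ginv x) x = gone;
  gmulVr : forall x, gmul x (ginv x) = gone }.

Arguments gmul {g}.
Arguments gone {g}.
Arguments ginv {g}.

Definition is_hom {H K : grp} (f : H -> K) : Prop :=
  forall x y, f (gmul x y) = gmul (f x) (f y).

Definition comm {H : grp} (a b : H) : H := gmul (gmul (ginv a) (ginv b)) (gmul a b).

Inductive gen {H : grp} (S : H -> Prop) : H -> Prop :=
| gen_in x : S x -> gen S x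
| gen_one : gen S gone
| gen_mul x y : gen S x -> gen S y -> gen S (gmul x y)
| gen_inv x : gen S x -> gen S (ginv x).

(* lcs n = C^{n+1}: lcs 0 = H, lcs (n+1) = [H, lcs n] *)
Fixpoint lcs {H : grp} (n : nat) : H -> Prop :=
  match n with
  | 0 => fun _ => True
  | S m => gen (fun z => exists a b, lcs m b /\ z = comm a b)
  end.

(* lower central series with the paper's indexing: C 1 = H, C (j+1) = [H, C j]
   (C 0 is also H; only j >= 1 is used) *)
Definition C {H : grp} (j : nat) : H -> Prop := lcs (pred j).

Definition cong {H : grp} (N : H -> Prop) (x y : H) : Prop := N (gmul (ginv x) y).

Definition is_normal {H : grp} (N : H -> Prop) : Prop :=
  N gone /\ (forall x y, N x -> N y -> N (gmul x y)) /\ (forall x, N x -> N (ginv x)) /\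
  (forall g x, N x -> N (gmul (gmul (ginv g) x) g)).

Definition residually_nilpotent (H : grp) : Prop :=
  forall x : H, (forall j, 1 <= j -> C j x) -> x = gone.

(* Gamma/[Gamma,Gamma] is finitely generated: finitely many elements together
   with C 2 = [Gamma,Gamma] generate Gamma *)
Definition abelianization_fg (H : grp) : Prop :=
  exists s : list H, forall x : H, gen (fun y => In y s \/ C 2 y) x.

Definition is_free_basis {X : Type} {F : grp} (b : X -> F) : Prop :=
  forall (G : grp) (f : X -> G),
    exists h : F -> G, is_hom h /\ (forall x, h (b x) = f x) /\
      (forall h' : F -> G, is_hom h' -> (forall x, h' (b x) = f x) -> forall y, h' y = h y).

(* H/N ≅ K/M as groups (N, M normal), written out: a map psi : H -> K inducing
   a well-defined, injective, multiplicative, surjective map H/N -> K/M. *)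
Definition quot_isomorphic {H K : grp} (N : H -> Prop) (M : K -> Prop) : Prop :=
  exists psi : H -> K,
    (forall x y, cong N x y <-> cong M (psi x) (psi y)) /\
    (forall x y, cong M (psi (gmul x y)) (gmul (psi x) (psi y))) /\
    (forall z, exists x, cong M (psi x) z).

Definition parafree (G : grp) : Prop :=
  residually_nilpotent G /\
  exists (X : Type) (F : grp) (b : X -> F), is_free_basis b /\
    forall j, 1 <= j -> quot_isomorphic (C (H := F) j) (C (H := G) j).

(* N normal with H/N nilpotent (i.e. C^c(H) <= N for some c) *)
Definition nilq {H : grp} (N : H -> Prop) : Prop :=
  is_normal N /\ exists c, forall x, C c x -> N x.

Record NQ (H : grp) := MkNQ { nq : H -> Prop; nq_nil : nilq nq }.
Arguments nq {H}.

(* True pronilpotent completion, as the inverse limit of the H/N: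
   compatible families (x_N)_N of representatives; two families are identified
   by PNi_eqv. *)
Definition PNi (H : grp) : Type :=
  { x : NQ H -> H | forall N M : NQ H, (forall h, nq N h -> nq M h) ->
      cong (nq M) (x N) (x M) }.

Definition PNi_eqv {H : grp} (x y : PNi H) : Prop :=
  forall N : NQ H, cong (nq N) (proj1_sig x N) (proj1_sig y N).

Section HomFacts.
Context {H K : grp} (f : H -> K) (hf : is_hom f).

Lemma hom_one : f gone = gone.
Proof.
  assert (E : f gone = gmul (f gone) (f gone)) by (rewrite <- hf, gmul1l; reflexivity).
  assert (E2 : gmul (ginv (f gone)) (f gone) = gmul (ginv (f gone)) (gmul (f gone) (f gone)))
    by (rewrite <- E; reflexivity).
  rewrite gmulA, gmulVl, gmul1l in E2. symmetry; exact E2.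
Qed.

Lemma hom_inv x : f (ginv x) = ginv (f x).
Proof.
  assert (E : gmul (f (ginv x)) (f x) = gone) by (rewrite <- hf, gmulVl; apply hom_one).
  rewrite <- (gmul1r _ (f (ginv x))), <- (gmulVr _ (f x)), gmulA, E, gmul1l.
  reflexivity.
Qed.

Lemma lcs_hom n x : lcs n x -> lcs n (f x).
Proof.
  revert x; induction n as [|n IH]; simpl; intros x Hx; [exact I|].
  induction Hx as [z Hz| |u v _ IHu _ IHv|u _ IHu].
  - destruct Hz as (a & b & Hb & ->). apply gen_in. exists (f a), (f b).
    split; [apply IH; exact Hb|]. unfold comm. rewrite !hf, !hom_inv. reflexivity.
  - rewrite hom_one. apply gen_one.
  - rewrite hf. apply gen_mul; assumption.
  - rewrite hom_inv. apply gen_inv; assumption.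
Qed.

Lemma pre_nilq (N : K -> Prop) : nilq N -> nilq (fun h => N (f h)).
Proof.
  intros [[H1 [HM [HI HC]]] [c Hc]]. split; [split; [|split; [|split]]|].
  - rewrite hom_one; exact H1.
  - intros x y Hx Hy. rewrite hf. apply HM; assumption.
  - intros x Hx. rewrite hom_inv. apply HI; assumption.
  - intros g x Hx. rewrite !hf, hom_inv. apply HC; assumption.
  - exists c. intros x Hx. apply Hc. apply lcs_hom. exact Hx.
Qed.

Definition pre_NQ (N : NQ K) : NQ H := MkNQ H (fun h => nq N (f h)) (pre_nilq _ (nq_nil K N)).

Definition PNi_map (x : PNi H) : PNi K.
Proof.
  refine (exist _ (fun N => f (proj1_sig x (pre_NQ N))) _).
  intros N M sub.
  pose proof (proj2_sig x (pre_NQ N) (pre_NQ M) (fun h hh => sub _ hh)) as E.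
  unfold cong in *; simpl in *. rewrite hf, hom_inv in E. exact E.
Defined.
End HomFacts.

(* A map g : PNi H -> PNi K (here always induced by a homomorphism, hence
   automatically a continuous homomorphism) is an isomorphism of topological
   groups: bijective (modulo identification of families) with continuous
   inverse, i.e. it maps basic open neighbourhoods onto neighbourhoods. *)
Definition PNi_iso {H K : grp} (g : PNi H -> PNi K) : Prop :=
  (forall x y, PNi_eqv (g x) (g y) -> PNi_eqv x y) /\
  (forall y, exists x, PNi_eqv (g x) y) /\
  (forall (x : PNi H) (N : NQ H), exists N' : NQ K, forall x' : PNi H,
      cong (nq N') (proj1_sig (g x') N') (proj1_sig (g x) N') ->
      cong (nq N) (proj1_sig x' N) (proj1_sig x N)).

(* Main.v *)
Require Import Defs.
From Stdlib Require Import Setoid Morphisms List ClassicalEpsilon ProofIrrelevance.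
From mathcomp Require Import all_boot all_algebra.
Set Implicit Arguments. Unset Strict Implicit. Unset Printing Implicit Defensive.
Import GRing.Theory.

Declare Scope g_scope.
Delimit Scope g_scope with g.
Notation "x * y" := (gmul x y) : g_scope.
Notation "x ^-1" := (ginv x) : g_scope.
Local Open Scope g_scope.

Section Basics.
Context {H : grp}.
Implicit Types x y z : H.
Lemma mulgA x y z : x * (y * z) = x * y * z. Proof. exact: gmulA. Qed.
Lemma mul1g x : gone * x = x. Proof. exact: gmul1l. Qed.
Lemma mulg1 x : x * gone = x. Proof. exact: gmul1r. Qed.
Lemma mulVg x : x^-1 * x = gone. Proof. exact: gmulVl. Qed.
Lemma mulgV x : x * x^-1 = gone. Proof. exact: gmulVr. Qed.
Lemma mulKg x y : x^-1 * (x * y) = y. Proof. by rewrite mulgA mulVg mul1g. Qed.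
Lemma mulKVg x y : x * (x^-1 * y) = y. Proof. by rewrite mulgA mulgV mul1g. Qed.
Lemma mulgK x y : x * y * y^-1 = x. Proof. by rewrite -mulgA mulgV mulg1. Qed.
Lemma mulgVK x y : x * y^-1 * y = x. Proof. by rewrite -mulgA mulVg mulg1. Qed.
Lemma inv_uniq x y : x * y = gone -> y = x^-1.
Proof. by move=> h; rewrite -(mulKg x y) h mulg1. Qed.
Lemma invgK x : (x^-1)^-1 = x.
Proof. by symmetry; apply: inv_uniq; rewrite mulVg. Qed.
Lemma invMg x y : (x * y)^-1 = y^-1 * x^-1.
Proof. by symmetry; apply: inv_uniq; rewrite mulgA mulgK mulgV. Qed.
Lemma invg1 : (gone : H)^-1 = gone.
Proof. by symmetry; apply: inv_uniq; rewrite mulg1. Qed.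
Lemma mulg_cancl x y z : x * y = x * z -> y = z.
Proof. by move=> h; rewrite -(mulKg x y) h mulKg. Qed.
End Basics.

Ltac gsimpl := repeat progress rewrite ?invMg ?invgK ?invg1 ?mulgA ?mul1g ?mulg1 ?mulgK ?mulgVK ?mulVg ?mulgV.

Definition conj {H : grp} (g x : H) := g^-1 * x * g.

Class Normal {H : grp} (N : H -> Prop) := normal_pf : is_normal N.

Section NormalTh.
Context {H : grp} (N : H -> Prop) {hN : Normal N}.
Lemma N1 : N gone. Proof. by case: hN. Qed.
Lemma NM x y : N x -> N y -> N (x * y). Proof. by move=> a b; case: hN => _ [hm _]; exact: hm. Qed.
Lemma NV x : N x -> N (x^-1). Proof. by move=> a; case: hN => _ [_ [hi _]]; exact: hi. Qed.
Lemma NJ g x : N x -> N (conj g x). Proof. by move=> a; case: hN => _ [_ [_ hc]]; exact: hc. Qed.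
Lemma NJ' g x : N x -> N (g * x * g^-1).
Proof. by move=> h; have := NJ (g^-1) h; rewrite /conj invgK. Qed.
Lemma NVE x : N (x^-1) -> N x. Proof. by move=> /NV; rewrite invgK. Qed.

Lemma cong_refl' : Reflexive (cong N).
Proof. by move=> x; rewrite /cong mulVg; apply: N1. Qed.
Lemma cong_sym' : Symmetric (cong N).
Proof. by move=> x y h; rewrite /cong; have := NV h; rewrite invMg invgK. Qed.
Lemma cong_trans' : Transitive (cong N).
Proof. by move=> x y z h1 h2; rewrite /cong -(mulKVg y z) mulgA; apply: NM. Qed.
#[global] Instance cong_Equiv : Equivalence (cong N).
Proof. split; [exact: cong_refl' | exact: cong_sym' | exact: cong_trans']. Qed.

#[global] Instance mul_Proper : Proper (cong N ==> cong N ==> cong N) (@gmul H).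
Proof.
move=> x x' hx y y' hy; rewrite /cong.
have -> : (x * y)^-1 * (x' * y') = conj y (x^-1 * x') * (y^-1 * y').
  by rewrite /conj; gsimpl.
by apply: NM => //; apply: NJ.
Qed.
#[global] Instance inv_Proper : Proper (cong N ==> cong N) (@ginv H).
Proof.
move=> x y h; rewrite /cong invgK.
have -> : x * y^-1 = conj (y^-1) (y^-1 * x) by rewrite /conj; gsimpl.
by apply: NJ; apply: cong_sym'.
Qed.

Lemma cong1E x : cong N gone x <-> N x.
Proof. by rewrite /cong invg1 mul1g. Qed.
Lemma cong1E' x : cong N x gone <-> N x.
Proof. split => h; [apply: NVE; move: h; rewrite /cong mulg1 // | by rewrite /cong mulg1; apply: NV]. Qed.
Lemma cong_mulr x k : N k -> cong N x (x * k).
Proof. by move=> h; rewrite /cong mulKg. Qed.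
Lemma cong_mem x y : cong N x y -> N x -> N y.
Proof. by move=> h hx; rewrite -(mulKVg x y); apply: NM. Qed.
End NormalTh.
Arguments cong1E {H} [N] x.

Lemma cong_sub {H : grp} {N M : H -> Prop} {x y : H} : (forall z, N z -> M z) -> cong N x y -> cong M x y.
Proof. by move=> s; apply: s. Qed.

Section Comm.
Context {H : grp} (N : H -> Prop) {hN : Normal N}.
#[global] Instance comm_Proper : Proper (cong N ==> cong N ==> cong N) (@comm H).
Proof. by move=> x x' hx y y' hy; rewrite /comm hx hy; reflexivity. Qed.
#[global] Instance conj_Proper : Proper (cong N ==> cong N ==> cong N) (@conj H).
Proof. by move=> x x' hx y y' hy; rewrite /conj hx hy; reflexivity. Qed.
End Comm.

Section Lcs.
Context {H : grp}.
Implicit Types x y z a b g k w : H.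

Lemma conjM g x y : conj g (x * y) = conj g x * conj g y. Proof. by rewrite /conj; gsimpl. Qed.
Lemma conjV g x : conj g (x^-1) = (conj g x)^-1. Proof. by rewrite /conj; gsimpl. Qed.
Lemma conj1 g : conj g gone = gone. Proof. by rewrite /conj; gsimpl. Qed.
Lemma conj_comm g a b : conj g (comm a b) = comm (conj g a) (conj g b).
Proof. by rewrite /conj /comm; gsimpl. Qed.
Lemma comm_inv a b : (comm a b)^-1 = comm b a. Proof. by rewrite /comm; gsimpl. Qed.
Lemma commMl x y z : comm (x * y) z = conj y (comm x z) * comm y z.
Proof. by rewrite /comm /conj; gsimpl. Qed.
Lemma commMr x y z : comm x (y * z) = comm x z * conj z (comm x y).
Proof. by rewrite /comm /conj; gsimpl. Qed.
Lemma comm1r a : comm a gone = gone. Proof. by rewrite /comm; gsimpl. Qed.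
Lemma comm1l a : comm gone a = gone. Proof. by rewrite /comm; gsimpl. Qed.

Lemma gen_min (S N : H -> Prop) {hN : Normal N} x :
  (forall z, S z -> N z) -> gen S x -> N x.
Proof.
move=> hS; elim=> [z hz | | u v _ hu _ hv | u _ hu].
- exact: hS.
- exact: N1.
- exact: NM.
- exact: NV.
Qed.

Lemma gen_mono (S T : H -> Prop) x : (forall z, S z -> T z) -> gen S x -> gen T x.
Proof.
move=> hS; elim=> [z hz | | u v _ hu _ hv | u _ hu].
- by apply: gen_in; apply: hS.
- exact: gen_one.
- exact: gen_mul.
- exact: gen_inv.
Qed.

Lemma gen_conj (S : H -> Prop) g x : (forall g z, S z -> S (conj g z)) -> gen S x -> gen S (conj g x).
Proof.
move=> hS; elim=> [z hz | | u v _ hu _ hv | u _ hu].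
- by apply: gen_in; apply: hS.
- by rewrite conj1; exact: gen_one.
- by rewrite conjM; exact: gen_mul.
- by rewrite conjV; exact: gen_inv.
Qed.

Lemma gen_normal (S : H -> Prop) : (forall g z, S z -> S (conj g z)) -> Normal (gen S).
Proof.
move=> hS; split; [exact: gen_one | split; [exact: gen_mul | split; [exact: gen_inv|]]].
by move=> g x hx; apply: (gen_conj g hS hx).
Qed.

#[global] Instance lcs_Normal n : Normal (@lcs H n).
Proof.
elim: n => [|n IH].
  by split; [done | split; [done | split; [done | done]]].
apply: gen_normal => g z [a [b [hb ->]]].
exists (conj g a), (conj g b); split; last exact: conj_comm.
exact: NJ.
Qed.

#[global] Instance C_Normal j : Normal (@C H j).
Proof. exact: lcs_Normal. Qed.

Lemma comm_lcs_r n a b : lcs n b -> lcs n.+1 (comm a b).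
Proof. by move=> hb; apply: gen_in; exists a, b. Qed.
Lemma comm_lcs_l n a b : lcs n a -> lcs n.+1 (comm a b).
Proof. by move=> ha; rewrite -comm_inv; apply: NV; apply: comm_lcs_r. Qed.

Lemma lcs_succ_sub n x : lcs n.+1 x -> lcs n x.
Proof.
apply: gen_min => z [a [b [hb ->]]].
have -> : comm a b = conj a (b^-1) * b by rewrite /comm /conj; gsimpl.
by apply: NM => //; apply: NJ; apply: NV.
Qed.

Lemma lcs_mono m n x : m <= n -> lcs n x -> lcs m x.
Proof.
move=> /subnK <-; elim: (n - m) x => [|d IH] x //.
by rewrite addSn => /lcs_succ_sub /IH.
Qed.

Lemma lcs0 x : lcs 0 x. Proof. done. Qed.

Lemma central n k x : lcs n k -> cong (lcs n.+1) (x * k) (k * x).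
Proof.
move=> hk; rewrite /cong.
have -> : (x * k)^-1 * (k * x) = comm k x by rewrite /comm; gsimpl.
exact: comm_lcs_l.
Qed.

Lemma conj_cong_l n g w : lcs n g -> cong (lcs n.+1) (conj g w) w.
Proof.
move=> hg; rewrite /cong.
have -> : (conj g w)^-1 * w = comm g w by rewrite /comm /conj; gsimpl.
exact: comm_lcs_l.
Qed.
Lemma conj_cong_r n g w : lcs n w -> cong (lcs n.+1) (conj g w) w.
Proof.
move=> hw; rewrite /cong.
have -> : (conj g w)^-1 * w = comm g w by rewrite /comm /conj; gsimpl.
exact: comm_lcs_r.
Qed.

Lemma comm_pert n a b k1 k2 : lcs n k1 -> lcs n k2 ->
  cong (lcs n.+1) (comm (a * k1) (b * k2)) (comm a b).
Proof.
move=> h1 h2; rewrite commMl (conj_cong_l _ h1) commMr (conj_cong_l _ h2).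
have e1 : cong (lcs n.+1) (comm k1 (b * k2)) gone.
  by apply/cong1E'; apply: comm_lcs_l.
have e2 : cong (lcs n.+1) (comm a k2) gone.
  by apply/cong1E'; apply: comm_lcs_r.
rewrite e1 e2 mul1g mulg1; reflexivity.
Qed.
End Lcs.

Definition qhom {H K : grp} (M : K -> Prop) (f : H -> K) := forall x y, cong M (f (x * y)) (f x * f y).

Section Qhom.
Context {H K : grp} (M : K -> Prop) {hM : Normal M} (f : H -> K) (hf : qhom M f).

Lemma qhom1 : cong M (f gone) gone.
Proof.
have h := hf gone gone; rewrite mul1g in h.
have h2 : cong M ((f gone)^-1 * f gone) ((f gone)^-1 * (f gone * f gone)) by rewrite -h; reflexivity.
by rewrite mulVg mulKg in h2; symmetry.
Qed.
Lemma qhomV x : cong M (f x^-1) (f x)^-1.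
Proof.
have h := hf x^-1 x; rewrite mulVg qhom1 in h.
have h2 : cong M (gone * (f x)^-1) (f x^-1 * f x * (f x)^-1) by rewrite -h; reflexivity.
by rewrite mul1g mulgK in h2; symmetry.
Qed.
Lemma qhom_comm a b : cong M (f (comm a b)) (comm (f a) (f b)).
Proof. by rewrite /comm !hf !qhomV; reflexivity. Qed.
Lemma qhom_conj g a : cong M (f (conj g a)) (conj (f g) (f a)).
Proof. by rewrite /conj !hf !qhomV; reflexivity. Qed.

Lemma qhom_lcs n x : (forall z, M z -> lcs n z) -> lcs n x -> lcs n (f x).
Proof.
elim: n x => [|n IH] x hMn //.
have hMn' : forall z, M z -> lcs n z by move=> z /hMn /lcs_succ_sub.
have cm : forall u v, cong M u v -> lcs n.+1 u -> lcs n.+1 v.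
  by move=> u v huv hu; exact: (cong_mem (cong_sub hMn huv) hu).
elim=> [z [a [b [hb ->]]] | | u v _ hu _ hv | u _ hu].
- apply: (cm (comm (f a) (f b))); first by symmetry; apply: qhom_comm.
  by apply: comm_lcs_r; apply: IH.
- by apply: (cm gone); [symmetry; apply: qhom1 | apply: N1].
- by apply: (cm (f u * f v)); [symmetry; apply: hf | apply: NM].
- by apply: (cm (f u)^-1); [symmetry; apply: qhomV | apply: NV].
Qed.

Lemma qhom_onto (hs : forall z, exists x, cong M (f x) z) n z :
  lcs n z -> exists x, lcs n x /\ cong M (f x) z.
Proof.
elim: n z => [|n IH] z.
  by move=> _; have [x hx] := hs z; exists x.
elim=> [w [a [b [hb ->]]] | | u v _ [x1 [h1 e1]] _ [x2 [h2 e2]] | u _ [x1 [h1 e1]]].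
- have [a' ea] := hs a; have [b' [hb' eb]] := IH _ hb.
  exists (comm a' b'); split; first exact: comm_lcs_r.
  by rewrite qhom_comm ea eb; reflexivity.
- by exists gone; split; [apply: N1 | apply: qhom1].
- exists (x1 * x2); split; first exact: NM.
  by rewrite hf e1 e2; reflexivity.
- exists (x1^-1); split; first exact: NV.
  by rewrite qhomV e1; reflexivity.
Qed.
End Qhom.

Lemma hom_qhom {H K : grp} (M : K -> Prop) {hM : Normal M} (f : H -> K) :
  is_hom f -> qhom M f.
Proof. by move=> hf x y; rewrite hf; reflexivity. Qed.

Lemma surj_up {F G : grp} (phi : F -> G) (hphi : is_hom phi) :
  (forall z, exists x, cong (lcs 1) (phi x) z) -> forall n z, exists x, cong (lcs n) (phi x) z.
Proof.
move=> h1; elim=> [|n IH] z.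
  by exists gone.
case: n IH => [_|n IH]; first exact: h1.
have step : forall w, lcs n.+1 w -> exists y, cong (lcs n.+2) (phi y) w.
  move=> w /(lcs_mono (m := 1)) => /(_ isT).
  elim=> [u [a [b [_ ->]]] | | u v _ [y1 e1] _ [y2 e2] | u _ [y1 e1]].
  - have [a1 ea] := IH a; have [b1 eb] := IH b.
    exists (comm a1 b1).
    have -> : comm a b = comm (phi a1 * ((phi a1)^-1 * a)) (phi b1 * ((phi b1)^-1 * b)).
      by rewrite !mulKVg.
    rewrite comm_pert //.
    rewrite /comm !hphi !(hom_inv phi hphi); reflexivity.
  - by exists gone; rewrite (hom_one phi hphi); reflexivity.
  - by exists (y1 * y2); rewrite hphi e1 e2; reflexivity.
  - by exists (y1^-1); rewrite (hom_inv phi hphi) e1; reflexivity.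
have [x ex] := IH z.
have [y ey] := step _ ex.
exists (x * y); rewrite hphi ey mulKVg; reflexivity.
Qed.

Section Completion.
Context {H : grp}.
#[global] Instance NQ_Normal (N : NQ H) : Normal (nq N).
Proof. by case: (nq_nil _ N). Qed.

Lemma nilq_lcs n : nilq (@lcs H n).
Proof. by split; [apply: lcs_Normal | exists n.+1]. Qed.

Definition NQlcs n : NQ H := MkNQ H (lcs n) (nilq_lcs n).

Lemma NQ_bound (N : NQ H) : exists k, forall x, lcs k x -> nq N x.
Proof. by case: (nq_nil _ N) => _ [c hc]; exists c.-1. Qed.

Definition constP (z : H) : PNi H :=
  @exist (NQ H -> H) (fun x => forall N M : NQ H, (forall h, nq N h -> nq M h) ->
      cong (nq M) (x N) (x M)) (fun _ => z) (fun N M _ => @cong_refl' _ (nq M) _ z).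
End Completion.

Arguments NQlcs : clear implicits.

Section Levels.
Context {F G : grp} (phi : F -> G) (hphi : is_hom phi).

Definition surjL := forall n z, exists x, cong (lcs n) (phi x) z.
Definition injL := forall n x y, cong (lcs n) (phi x) (phi y) -> cong (lcs n) x y.

Lemma injL_mem (hi : injL) n h : lcs n (phi h) -> lcs n h.
Proof.
move=> hh; apply/(cong1E (N := lcs n)); apply: hi.
rewrite (hom_one phi hphi); apply/(cong1E (N := lcs n)); exact: hh.
Qed.

Lemma iso_of_levels : surjL -> injL -> PNi_iso (PNi_map phi hphi).
Proof.
move=> hs hi; split; [|split].
- move=> x y hxy N.
  have [k hk] := NQ_bound N.
  set P := pre_NQ phi hphi (NQlcs G k).
  have sP : forall h, nq P h -> nq N h by move=> h /= /(injL_mem hi) /hk.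
  have e := hxy (NQlcs G k); rewrite /= -/P in e.
  have e2 : cong (nq N) (proj1_sig x P) (proj1_sig y P) by apply: (cong_sub hk); apply: hi.
  etransitivity; first by symmetry; apply: (proj2_sig x P N sP).
  etransitivity; first exact: e2.
  exact: (proj2_sig y P N sP).
- move=> y.
  pose kk (N : NQ F) := proj1_sig (constructive_indefinite_description _ (NQ_bound N)).
  have hkk : forall N x, lcs (kk N) x -> nq N x.
    by move=> N; exact: (proj2_sig (constructive_indefinite_description _ (NQ_bound N))).
  pose uu (N : NQ F) := proj1_sig (constructive_indefinite_description _
                            (hs (kk N) (proj1_sig y (NQlcs G (kk N))))).
  have huu : forall N, cong (lcs (kk N)) (phi (uu N)) (proj1_sig y (NQlcs G (kk N))).
    by move=> N; exact: (proj2_sig (constructive_indefinite_description _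
                            (hs (kk N) (proj1_sig y (NQlcs G (kk N)))))).
  have ycomp : forall a b, a <= b -> cong (lcs a) (proj1_sig y (NQlcs G b)) (proj1_sig y (NQlcs G a)).
    by move=> a b hab; apply: (proj2_sig y (NQlcs G b) (NQlcs G a)) => h /=; apply: lcs_mono.
  have comp : forall N M : NQ F, (forall h, nq N h -> nq M h) -> cong (nq M) (uu N) (uu M).
    move=> N M sNM.
    have key : forall e, e <= kk N -> e <= kk M -> cong (lcs e) (uu N) (uu M).
      move=> e h1 h2; apply: hi.
      etransitivity; first by apply: (cong_sub (N := lcs (kk N))); [move=> z; apply: lcs_mono | apply: huu].
      etransitivity; first exact: ycomp h1.
      symmetry.
      etransitivity; first by apply: (cong_sub (N := lcs (kk M))); [move=> z; apply: lcs_mono | apply: huu].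
      exact: ycomp h2.
    case: (leqP (kk N) (kk M)) => hNM.
      by apply: (cong_sub (N := lcs (kk N))); [move=> z /hkk /sNM | apply: key].
    by apply: (cong_sub (N := lcs (kk M))); [move=> z /hkk | apply: key => //; apply: ltnW].
  exists (exist _ uu comp) => N' /=.
  set P := pre_NQ phi hphi N'.
  have [k' hk'] := NQ_bound N'.
  have sub : forall z, lcs (kk P) z -> nq N' z.
    move=> z hz.
    have hs' : forall z, exists x, cong (lcs k') (phi x) z by move=> z'; apply: hs.
    have [w [hw ew]] := qhom_onto (hom_qhom (M := lcs k') hphi) hs' hz.
    rewrite -(mulKVg (phi w) z); apply: NM; first exact: (hkk P).
    by apply: hk'.
  etransitivity; first by apply: (cong_sub sub); apply: huu.
  by apply: (proj2_sig y (NQlcs G (kk P)) N').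
- move=> x N.
  have [k hk] := NQ_bound N.
  exists (NQlcs G k) => x' /= e.
  set P := pre_NQ phi hphi (NQlcs G k).
  have sP : forall h, nq P h -> nq N h by move=> h /= /(injL_mem hi) /hk.
  rewrite -/P in e.
  have e2 : cong (nq N) (proj1_sig x' P) (proj1_sig x P) by apply: (cong_sub hk); apply: hi.
  etransitivity; first by symmetry; apply: (proj2_sig x' P N sP).
  etransitivity; first exact: e2.
  exact: (proj2_sig x P N sP).
Qed.

Lemma levels_of_iso : PNi_iso (PNi_map phi hphi) -> surjL /\ injL.
Proof.
move=> [hinj [hsur h3]].
have hs : surjL.
  move=> n z; have [x hx] := hsur (constP z).
  by exists (proj1_sig x (pre_NQ phi hphi (NQlcs G n))); apply: (hx (NQlcs G n)).
split => //.
have key : forall n w, lcs n (phi w) -> lcs n w.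
  move=> n w hw.
  have [N' hN'] := h3 (constP gone) (NQlcs F n).
  have [k' hk'] := NQ_bound N'.
  have hs' : forall z, exists x, cong (lcs k') (phi x) z by move=> z'; apply: hs.
  have [v [hv ev]] := qhom_onto (hom_qhom (M := lcs k') hphi) hs' hw.
  have := hN' (constP (v^-1 * w)) => /=.
  rewrite (hom_one phi hphi) => /(_ _) h.
  have : cong (lcs n) (v^-1 * w) gone.
    apply: h; apply/(cong1E' (N := nq N')); apply: hk'.
    by rewrite hphi (hom_inv phi hphi).
  move/(cong1E' (N := lcs n)) => hw'.
  by rewrite -(mulKVg v w); apply: NM.
move=> n x y hxy; apply: key.
by rewrite hphi (hom_inv phi hphi); exact: hxy.
Qed.
End Levels.

Section SubG.
Context {H : grp} (S : H -> Prop).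
Definition sgT := {x : H | gen S x}.
Definition sg_mul (u v : sgT) : sgT := exist _ (proj1_sig u * proj1_sig v) (@gen_mul H S _ _ (proj2_sig u) (proj2_sig v)).
Definition sg_one : sgT := exist _ gone (gen_one S).
Definition sg_inv (u : sgT) : sgT := exist _ ((proj1_sig u)^-1) (@gen_inv H S _ (proj2_sig u)).
Lemma sg_eq (u v : sgT) : proj1_sig u = proj1_sig v -> u = v.
Proof.
case: u => x hx; case: v => y hy /= e; subst y.
by rewrite (proof_irrelevance _ hx hy).
Qed.
Definition subG : grp.
Proof.
refine (@Grp sgT sg_mul sg_one sg_inv _ _ _ _ _); intros; apply: sg_eq => /=.
- exact: mulgA.
- exact: mul1g.
- exact: mulg1.
- exact: mulVg.
- exact: mulgV.
Defined.
End SubG.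

Lemma basis_gen {X : Type} {F : grp} (b : X -> F) : is_free_basis b ->
  forall y, gen (fun z => exists x, z = b x) y.
Proof.
move=> fb y.
set S := fun z => exists x, z = b x.
have [h [hh [hb _]]] := fb (subG S) (fun x => exist _ (b x) (@gen_in F S _ (ex_intro _ x erefl))).
have [h0 [_ [_ hu]]] := fb F b.
have e1 := hu (fun y => proj1_sig (h y)).
have e2 : forall y, id y = h0 y by apply: hu.
have -> : y = proj1_sig (h y).
  rewrite e1; first exact: e2.
  - by move=> u v; rewrite hh.
  - by move=> x; rewrite hb.
by case: (h y).
Qed.

Definition Z2 : grp.
Proof.
refine (@Grp bool xorb false id _ _ _ _ _);
  intros; repeat match goal with [ b : bool |- _ ] => destruct b end; reflexivity.
Defined.

Lemma free_finite {X : Type} {F : grp} (b : X -> F) (fb : is_free_basis b) (Y : list X)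
  (hY : forall w, gen (fun z => (exists x, In x Y /\ z = b x) \/ lcs 1 z) w) :
  forall x, In x Y.
Proof.
move=> x; case: (classic (In x Y)) => // nx.
pose f (x' : X) : Z2 := if excluded_middle_informative (x' = x) then true else false.
have [h [hh [hb _]]] := fb Z2 f.
have kill : forall w, gen (fun z => (exists x, In x Y /\ z = b x) \/ lcs 1 z) w -> h w = false.
  move=> w; elim=> [z [[x' [hx' ->]] | hz] | | u v _ hu _ hv | u _ hu].
  - rewrite hb /f; case: excluded_middle_informative => // e; subst x'; by case: nx.
  - elim: hz => [z' [a [c [_ ->]]] | | u v _ hu _ hv | u _ hu].
    + rewrite /comm !hh !(hom_inv h hh) /=.
      by case: (h a); case: (h c).
    + exact: (hom_one h hh).
    + by rewrite hh hu hv.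
    + by rewrite (hom_inv h hh) hu.
  - exact: (hom_one h hh).
  - by rewrite hh hu hv.
  - by rewrite (hom_inv h hh) hu.
have := kill _ (hY (b x)); rewrite hb /f.
by case: excluded_middle_informative.
Qed.

Lemma gen_support {X : Type} {F : grp} (b : X -> F) (w : F) :
  gen (fun z => exists x, z = b x) w -> exists Y : list X, gen (fun z => exists x, In x Y /\ z = b x) w.
Proof.
elim=> [z [x ->] | | u v _ [Y1 h1] _ [Y2 h2] | u _ [Y1 h1]].
- by exists (x :: nil); apply: gen_in; exists x; split => //; left.
- by exists nil; apply: gen_one.
- exists (Y1 ++ Y2); apply: gen_mul.
  + by apply: (gen_mono _ h1) => z [x [hx ->]]; exists x; split => //; apply: in_or_app; left.
  + by apply: (gen_mono _ h2) => z [x [hx ->]]; exists x; split => //; apply: in_or_app; right.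
- by exists Y1; apply: gen_inv.
Qed.

Lemma X_finite {X : Type} {F G : grp} (b : X -> F) (fb : is_free_basis b)
  (hab : abelianization_fg G) (Q2 : quot_isomorphic (C (H := F) 2) (C (H := G) 2)) :
  exists Y : list X, forall x, In x Y.
Proof.
have [s hs] := hab.
have [psi [hc [hq hsur]]] := Q2.
have hq' : qhom (lcs 1) psi := hq.
have [Y hY] : exists Y : list X, forall y, In y s -> exists w,
    gen (fun z => exists x, In x Y /\ z = b x) w /\ cong (lcs 1) (psi w) y.
  elim: s {hs} => [|y s [Y hY]]; first by exists nil.
  have [w hw] := hsur y.
  have [Y1 h1] := gen_support (basis_gen fb w).
  exists (Y1 ++ Y) => y' [<- | hy'].
  + exists w; split => //.
    by apply: (gen_mono _ h1) => z [x [hx ->]]; exists x; split => //; apply: in_or_app; left.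
  + have [w' [h' e']] := hY _ hy'; exists w'; split => //.
    by apply: (gen_mono _ h') => z [x [hx ->]]; exists x; split => //; apply: in_or_app; right.
exists Y; apply: (free_finite fb) => w.
set W := gen (fun z => (exists x, In x Y /\ z = b x) \/ lcs 1 z).
have stepb : forall z, gen (fun y => In y s \/ C 2 y) z -> exists w, W w /\ cong (lcs 1) (psi w) z.
  move=> z; elim=> [y [hy | hy] | | u v _ [w1 [h1 e1]] _ [w2 [h2 e2]] | u _ [w1 [h1 e1]]].
  - have [w' [h' e']] := hY _ hy; exists w'; split => //.
    by apply: (gen_mono _ h') => z' hz'; left.
  - exists gone; split; first exact: gen_one.
    rewrite (qhom1 hq'); symmetry; apply/(cong1E' (N := lcs 1)); exact: hy.
  - by exists gone; split; [apply: gen_one | apply: (qhom1 hq')].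
  - by exists (w1 * w2); split; [apply: gen_mul | rewrite hq' e1 e2; reflexivity].
  - by exists (w1^-1); split; [apply: gen_inv | rewrite (qhomV hq') e1; reflexivity].
have [w' [hw' e']] := stepb _ (hs (psi w)).
have : cong (lcs 1) w' w by apply/hc.
rewrite /cong => hk.
rewrite -(mulKVg w' w); apply: gen_mul => //; apply: gen_in; right; exact: hk.
Qed.

Lemma free_transfer {X X' : Type} {F : grp} (b : X -> F) (fb : is_free_basis b)
  (e : X' -> X) (e' : X -> X') (h1 : forall x, e (e' x) = x) (h2 : forall x', e' (e x') = x') :
  is_free_basis (fun x' => b (e x')).
Proof.
move=> G f'.
have [h [hh [hb hu]]] := fb G (fun x => f' (e' x)).
exists h; split => //; split; first by move=> x'; rewrite hb h2.
move=> h' hh' hb'; apply: hu => // x.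
by rewrite -{1}(h1 x) hb'.
Qed.

Lemma reindex {X : Type} {F : grp} (b : X -> F) (fb : is_free_basis b) (Y : list X)
  (hY : forall x, In x Y) :
  exists (n : nat) (b' : {i : nat | (i < n)%coq_nat} -> F), is_free_basis b'.
Proof.
pose dec := fun x y : X => excluded_middle_informative (x = y).
set Z := nodup dec Y.
have hZ : forall x, In x Z by move=> x; apply/nodup_In.
have nZ : NoDup Z := NoDup_nodup dec Y.
case EZ : Z hZ nZ => [|d Z'] hZ nZ.
  exists 0.
  pose e := fun i : {i : nat | (i < 0)%coq_nat} => False_rect X (PeanoNat.Nat.nlt_0_r _ (proj2_sig i)).
  pose e' := fun x : X => False_rect {i : nat | (i < 0)%coq_nat} (hZ x).
  exists (fun i => b (e i)); apply: (free_transfer fb (e' := e')).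
  - by move=> x; case: (hZ x).
  - by move=> [i hi]; case: (PeanoNat.Nat.nlt_0_r _ hi).
exists (List.length (d :: Z')).
pose e := fun i : {i : nat | (i < List.length (d :: Z'))%coq_nat} => List.nth (proj1_sig i) (d :: Z') d.
have ex : forall x, exists i, (i < List.length (d :: Z'))%coq_nat /\ List.nth i (d :: Z') d = x.
  by move=> x; apply: In_nth.
pose c := fun x => constructive_indefinite_description _ (ex x).
pose e' := fun x => exist (fun i => (i < List.length (d :: Z'))%coq_nat) (proj1_sig (c x)) (proj1 (proj2_sig (c x))).
exists (fun i => b (e i)); apply: (free_transfer fb (e' := e')).
- by move=> x; rewrite /e /e' /=; exact: (proj2 (proj2_sig (c x))).
- move=> [i hi]; rewrite /e' /e /=.
  set cc := c _.
  have [hlt heq] := proj2_sig cc.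
  have ei : proj1_sig cc = i.
    by apply: (proj1 (NoDup_nth (d :: Z') d) nZ) => //.
  move: (proj1 (proj2_sig cc)); rewrite ei => p.
  by rewrite (proof_irrelevance _ p hi).
Qed.

Definition span {H : grp} (N : H -> Prop) (T : list H) := gen (fun z => In z T \/ N z).

Section Span.
Context {H : grp}.
Lemma span_cong (N : H -> Prop) {hN : Normal N} T u v : cong N u v -> span N T u -> span N T v.
Proof. by move=> e hu; rewrite -(mulKVg u v); apply: gen_mul => //; apply: gen_in; right. Qed.

Lemma span_lcs n (T : list H) (w : H) : (forall t, In t T -> lcs n t) -> span (lcs n.+1) T w -> lcs n w.
Proof.
move=> hT; apply: gen_min => z [/hT // | /lcs_succ_sub //].
Qed.

Lemma layers_fg (S : list H) (hS : forall y, gen (fun z => In z S) y) n :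
  exists T : list H, (forall t, In t T -> lcs n t) /\ forall w : H, lcs n w -> span (lcs n.+1) T w.
Proof.
elim: n => [|n [T [hT hsp]]].
  exists S; split => // w _; apply: (gen_mono _ (hS w)) => z hz; by left.
exists (flat_map (fun s => List.map (comm s) T) S); split.
  move=> t /in_flat_map [s [_ /in_map_iff [t0 [<- ht0]]]].
  by apply: comm_lcs_r; apply: hT.
set SP := span (lcs n.+2) (flat_map (fun s => List.map (comm s) T) S).
have inSP : forall z, lcs n.+2 z -> SP z by move=> z hz; apply: gen_in; right.
have claimA : forall a t, In t T -> SP (comm a t).
  move=> a t ht; have htl := hT _ ht.
  elim: (hS a) => [s hs | | x y _ hx _ hy | x _ hx].
  - apply: gen_in; left; apply/in_flat_map; exists s; split => //.
    by apply: in_map.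
  - by rewrite comm1l; apply: gen_one.
  - rewrite commMl; apply: (span_cong (N := lcs n.+2)).
      apply: mul_Proper; last reflexivity.
      symmetry; apply: conj_cong_r; exact: comm_lcs_r.
    exact: gen_mul.
  - have e : comm (x^-1) t = (conj x^-1 (comm x t))^-1.
      by rewrite /comm /conj; gsimpl.
    rewrite e; apply: gen_inv; apply: (span_cong (N := lcs n.+2)) hx.
    symmetry; apply: conj_cong_r; exact: comm_lcs_r.
have claimB : forall a b, span (lcs n.+1) T b -> SP (comm a b).
  move=> a b; elim=> [z [hz | hz] | | y z hy IHy hz IHz | y hy IHy].
  - exact: claimA.
  - by apply: inSP; apply: comm_lcs_r.
  - by rewrite comm1r; apply: gen_one.
  - have hyl := span_lcs hT hy.
    rewrite commMr; apply: (span_cong (N := lcs n.+2)).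
      apply: mul_Proper; first reflexivity.
      symmetry; apply: conj_cong_r; exact: comm_lcs_r.
    exact: gen_mul.
  - have hyl := span_lcs hT hy.
    have e : comm a (y^-1) = (conj y^-1 (comm a y))^-1.
      by rewrite /comm /conj; gsimpl.
    rewrite e; apply: gen_inv; apply: (span_cong (N := lcs n.+2)) IHy.
    symmetry; apply: conj_cong_r; exact: comm_lcs_r.
move=> w; elim=> [z [a [b [hb ->]]] | | y z _ hy _ hz | y _ hy].
- by apply: claimB; apply: hsp.
- exact: gen_one.
- exact: gen_mul.
- exact: gen_inv.
Qed.
End Span.

Section Pow.
Context {H : grp}.
Implicit Types x y : H.

Fixpoint gpow x (n : nat) : H := match n with 0 => gone | S m => gpow x m * x end.
Definition gpowz x (z : int) : H :=
  match z with Posz n => gpow x n | Negz n => (gpow x n.+1)^-1 end.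

Lemma gpowS' x n : gpow x n.+1 = x * gpow x n.
Proof.
elim: n => [|n IH]; first by rewrite /= mul1g mulg1.
by change (gpow x n.+1 * x = x * (gpow x n * x)); rewrite IH mulgA.
Qed.

Lemma gpowz_succ x z : gpowz x (z + 1)%R = gpowz x z * x.
Proof.
case: z => n.
  have -> : (Posz n + 1)%R = Posz n.+1 by rewrite -addn1 PoszD.
  by [].
case: n => [|n].
  have -> : (Negz 0 + 1)%R = 0%R by rewrite NegzE GRing.addNr.
  by rewrite /= mul1g mulVg.
have -> : (Negz n.+1 + 1)%R = Negz n by rewrite !NegzE -(addn1 n.+1) PoszD GRing.opprD GRing.subrK.
by rewrite /gpowz [gpow x n.+2]gpowS' invMg mulgVK.
Qed.

Lemma gpowz_pred x z : gpowz x (z - 1)%R = gpowz x z * x^-1.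
Proof.
have := gpowz_succ x (z - 1)%R; rewrite GRing.subrK => ->.
by rewrite mulgK.
Qed.

Lemma gpowz0 x : gpowz x 0%R = gone. Proof. by []. Qed.
Lemma gpowz1 x : gpowz x 1%R = x. Proof. by rewrite /= mul1g. Qed.

Lemma gpowzD x a b : gpowz x (a + b)%R = gpowz x a * gpowz x b.
Proof.
elim/int_rect: b => [|n IH|n IH].
- by rewrite GRing.addr0 gpowz0 mulg1.
- have -> : (a + Posz n.+1)%R = ((a + Posz n) + 1)%R by rewrite -GRing.addrA -PoszD addn1.
  rewrite gpowz_succ IH -mulgA; congr (_ * _).
- have -> : (a + - Posz n.+1)%R = ((a + - Posz n) - 1)%R.
    by rewrite -GRing.addrA -GRing.opprD -PoszD addn1.
  rewrite gpowz_pred IH -mulgA; congr (_ * _).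
  have -> : (- Posz n.+1)%R = (- Posz n - 1)%R by rewrite -GRing.opprD -PoszD addn1.
  by rewrite gpowz_pred.
Qed.

Lemma gpowzN x z : gpowz x (- z)%R = (gpowz x z)^-1.
Proof.
apply: inv_uniq; rewrite -gpowzD GRing.subrr //.
Qed.

Lemma gpow_mem (N : H -> Prop) {hN : Normal N} x n : N x -> N (gpow x n).
Proof. by move=> hx; elim: n => [|n IH] /=; [apply: N1 | exact: (NM IH hx)]. Qed.
Lemma gpowz_mem (N : H -> Prop) {hN : Normal N} x z : N x -> N (gpowz x z).
Proof.
move=> hx; case: z => n; rewrite /gpowz; first exact: (@gpow_mem N hN x _ hx).
apply: NV; exact: (@gpow_mem N hN x _ hx).
Qed.

#[global] Instance gpowz_Proper (N : H -> Prop) {hN : Normal N} :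
  Proper (cong N ==> eq ==> cong N) gpowz.
Proof.
move=> x y e z _ <-.
have hp : forall n, cong N (gpow x n) (gpow y n).
  by elim=> [|n IH] /=; [reflexivity | rewrite IH e; reflexivity].
by case: z => n; rewrite /gpowz hp; reflexivity.
Qed.

Fixpoint prodg (k : nat) (F : nat -> H) : H :=
  match k with 0 => gone | S k' => prodg k' F * F k' end.

Lemma prodgS k F : prodg k.+1 F = prodg k F * F k. Proof. by []. Qed.
Lemma prodg0 F : prodg 0 F = gone. Proof. by []. Qed.

Lemma prodg_ext k F G : (forall i, i < k -> F i = G i) -> prodg k F = prodg k G.
Proof.
elim: k => [|k IH] h //=; rewrite IH ?h // => i hi; apply: h; exact: ltnW.
Qed.

Lemma prodg_cong (N : H -> Prop) {hN : Normal N} k F G :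
  (forall i, cong N (F i) (G i)) -> cong N (prodg k F) (prodg k G).
Proof.
move=> h; elim: k => [|k IH] /=; first reflexivity.
by rewrite IH h; reflexivity.
Qed.

Lemma prodg_mem (N : H -> Prop) {hN : Normal N} k F : (forall i, N (F i)) -> N (prodg k F).
Proof. by move=> h; elim: k => [|k IH] /=; [apply: N1 | exact: (NM IH (h k))]. Qed.

Lemma prodg_mul n k F G : (forall i, lcs n (G i)) ->
  cong (lcs n.+1) (prodg k (fun i => F i * G i)) (prodg k F * prodg k G).
Proof.
move=> hG; elim: k => [|k IH]; first by rewrite !prodg0 mulg1; reflexivity.
rewrite !prodgS.
rewrite IH.
have hP : lcs n (prodg k G) by apply: prodg_mem.
rewrite -!mulgA; apply: mul_Proper; first reflexivity.
rewrite !mulgA; apply: mul_Proper; last reflexivity.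
symmetry; exact: central.
Qed.

Lemma prodg_one k : prodg k (fun _ => gone) = gone.
Proof. by elim: k => [|k IH] //=; rewrite IH mulg1. Qed.

Lemma prodg_delta k (F : nat -> H) i :
  prodg k (fun j => if j == i then F j else gone) = if i < k then F i else gone.
Proof.
elim: k => [|k IH] //=; rewrite IH [k == i]eq_sym.
case: (ltngtP i k) => hik; rewrite ?mulg1 ?mul1g.
- by rewrite ltnS ltnW.
- by rewrite ltnS leqNgt hik.
- by subst; rewrite ltnSn.
Qed.
End Pow.

Section Key.
Local Open Scope ring_scope.
Variables (n' : nat) (K : 'rV[int]_n'.+1 -> Prop).
Hypothesis K0 : K 0.
Hypothesis KD : forall u v, K u -> K v -> K (u + v).
Hypothesis KN : forall u, K u -> K (- u).
Variable D : 'M[int]_n'.+1.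
Hypothesis KM : forall u, K u -> K (u *m D).

Lemma KB u v : K u -> K v -> K (u - v).
Proof. by move=> ? ?; apply: KD => //; apply: KN. Qed.

Lemma Kz (c : int) u : K u -> K (c *: u).
Proof.
move=> Ku; case: c => n.
  elim: n => [|n IH]; first by rewrite scale0r.
  by rewrite -[Posz n.+1]/(1 + Posz n) scalerDl scale1r; apply: KD.
rewrite NegzE scaleNr; apply: KN.
elim: n => [|n IH]; first by rewrite scale1r.
by rewrite -[Posz n.+2]/(1 + Posz n.+1) scalerDl scale1r; apply: KD.
Qed.

Lemma Ksum (I : Type) (r : seq I) (P : pred I) (F : I -> 'rV_n'.+1) :
  (forall i, P i -> K (F i)) -> K (\sum_(i <- r | P i) F i).
Proof. by move=> h; apply: big_ind => //. Qed.

Definition Kmx m (M : 'M[int]_(m, n'.+1)) := forall i, K (row i M).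

Lemma Kmx_mull m p (B : 'M[int]_(p, m)) M : Kmx M -> Kmx (B *m M).
Proof.
move=> hM i; rewrite row_mul mulmx_sum_row; apply: Ksum => j _; apply: Kz; exact: hM.
Qed.

Lemma Kmx_mulr m M : Kmx M -> Kmx (M *m D :> 'M_(m, _)).
Proof. by move=> hM i; rewrite row_mul; apply: KM. Qed.

Lemma Kmx_mulrX m k M : Kmx M -> Kmx (M *m D ^+ k :> 'M_(m, _)).
Proof.
elim: k M => [|k IH] M hM; first by rewrite expr0 mulmx1.
by rewrite exprS mulmxA; apply: IH; apply: Kmx_mulr.
Qed.

Lemma Kmx_add m (M N : 'M_(m, _)) : Kmx M -> Kmx N -> Kmx (M + N).
Proof. by move=> h1 h2 i; rewrite linearD; apply: KD; [apply: h1|apply: h2]. Qed.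
Lemma Kmx_opp m (M : 'M_(m, _)) : Kmx M -> Kmx (- M).
Proof. by move=> h1 i; rewrite linearN; apply: KN; apply: h1. Qed.
Lemma Kmx_scale m c (M : 'M_(m, _)) : Kmx M -> Kmx (c *: M).
Proof. by move=> h1 i; rewrite linearZ; apply: Kz; apply: h1. Qed.
Lemma Kmx_sum m (I : Type) (r : seq I) (P : pred I) (F : I -> 'M_(m,_)) :
  (forall i, P i -> Kmx (F i)) -> Kmx (\sum_(i <- r | P i) F i).
Proof.
move=> h; apply: big_ind => //; [by move=> i; rewrite row0 | exact: Kmx_add].
Qed.

Variable A : 'M[int]_n'.+1.
Hypothesis KAD : Kmx (1 - A *m D).

Lemma KAk k p : (k <= p)%N -> Kmx (A ^+ k *m D ^+ p - D ^+ (p - k)).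
Proof.
elim: k p => [|k IH] p hkp.
  by rewrite expr0 mul1mx subn0 subrr => i; rewrite row0.
case: p hkp => // p hkp.
have -> : A ^+ k.+1 *m D ^+ p.+1 - D ^+ (p.+1 - k.+1)
   = (A ^+ k *m D ^+ p - D ^+ (p - k)) - (A ^+ k *m (1 - A *m D)) *m D ^+ p.
  rewrite subSS !mulmxE mulrBr mulr1 mulrBl opprB addrA [in RHS]addrAC [in RHS](addrAC (A ^+ k * D ^+ p)) subrr add0r [in LHS]addrC.
  by rewrite exprSr exprS !mulrA.
apply: Kmx_add; first exact: IH.
by apply: Kmx_opp; apply: Kmx_mulrX; apply: Kmx_mull.
Qed.

Lemma Kmx_vec (u : 'rV_n'.+1) M : Kmx M -> K (u *m M).
Proof. by move=> h; rewrite -(row_id 0 (u *m M)); apply: Kmx_mull. Qed.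

Lemma K_mulX k u : K u -> K (u *m D ^+ k).
Proof.
elim: k u => [|k IH] u hu; first by rewrite expr0 mulmx1.
by rewrite exprS mulmxA; apply: IH; apply: KM.
Qed.

Lemma horner_mx_sum (p : {poly int}) :
  horner_mx A p = \sum_(i < size p) p`_i *: A ^+ i.
Proof.
rewrite -{1}[p]coefK poly_def rmorph_sum; apply: eq_bigr => i _.
by rewrite -mul_polyC rmorphM /= horner_mx_C rmorphXn /= horner_mx_X -mulmxE mul_scalar_mx.
Qed.

Lemma key_inj u : K (u *m D) -> K u.
Proof.
move=> huD.
set p := char_poly A.
have sp : size p = n'.+2 by rewrite size_char_poly.
have lp : p`_n'.+1 = 1.
  have := char_poly_monic A; rewrite monicE /lead_coef sp => /eqP; done.
have CH := Cayley_Hamilton A; rewrite horner_mx_sum sp in CH.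
have H1 : Kmx (\sum_(i < n'.+2) p`_i *: (A ^+ i *m D ^+ n'.+1 - D ^+ (n'.+1 - i))).
  apply: Kmx_sum => i _; apply: Kmx_scale; apply: KAk; rewrite -ltnS; exact: ltn_ord.
have E1 : \sum_(i < n'.+2) p`_i *: (A ^+ i *m D ^+ n'.+1 - D ^+ (n'.+1 - i))
   = - \sum_(i < n'.+2) p`_i *: D ^+ (n'.+1 - i).
  rewrite -sumrN -[X in X = _]subr0 -[X in _ - X = _](@mul0mx _ _ _ _ (D ^+ n'.+1)).
  rewrite -{2}CH mulmx_suml -sumrB /=; apply: eq_bigr => i _.
  by rewrite scalerBr -scalemxAl /p addrAC subrr add0r.
rewrite E1 in H1.
have H2 : Kmx (\sum_(i < n'.+2) p`_i *: D ^+ (n'.+1 - i)).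
  by rewrite -[X in Kmx X]opprK; apply: Kmx_opp.
set Q := \sum_(i < n'.+1) p`_i *: D ^+ (n'.+1 - i).-1.
have E2 : \sum_(i < n'.+2) p`_i *: D ^+ (n'.+1 - i) = 1 + D *m Q.
  rewrite big_ord_recr /= lp subnn expr0 scale1r addrC; congr (_ + _).
  rewrite mulmx_sumr; apply: eq_bigr => i _.
  rewrite -scalemxAr mulmxE -exprS prednK //.
  by rewrite subn_gt0.
rewrite E2 in H2.
have -> : u = u *m (1 + D *m Q) - (u *m D) *m Q.
  by rewrite mulmxDr mulmx1 mulmxA addrK.
apply: KB; first exact: Kmx_vec.
rewrite /Q mulmx_sumr; apply: Ksum => i _.
by rewrite -scalemxAr; apply: Kz; apply: K_mulX.
Qed.
End Key.

Section AddDecomp.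
Local Open Scope ring_scope.
Local Open Scope g_scope.
Context {K : grp} (N : K -> Prop) {hN : Normal N} (r' : nat).
Notation rV := 'rV[int]_r'.+1.
Definition addf (f : rV -> K) := forall u v, cong N (f (u + v)) (f u * f v).
Variable f : rV -> K.
Hypothesis hf : addf f.

Lemma addf0 : cong N (f 0) gone.
Proof.
have h := hf 0 0; rewrite GRing.addr0 in h.
have h2 : cong N ((f 0)^-1 * f 0) ((f 0)^-1 * (f 0 * f 0)) by rewrite -h; reflexivity.
by rewrite mulVg mulKg in h2; symmetry.
Qed.

Lemma addfN u : cong N (f (- u)) (f u)^-1.
Proof.
have h := hf u (- u); rewrite GRing.subrr addf0 in h.
have h2 : cong N ((f u)^-1 * gone) ((f u)^-1 * (f u * f (- u))) by rewrite -h; reflexivity.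
by rewrite mulg1 mulKg in h2; symmetry.
Qed.

Lemma addfZ (c : int) u : cong N (f (c *: u)) (gpowz (f u) c).
Proof.
elim/int_rect: c => [|k IH|k IH].
- by rewrite GRing.scale0r addf0 gpowz0; reflexivity.
- have -> : (Posz k.+1 *: u) = Posz k *: u + u.
    by rewrite -(addn1 k) PoszD GRing.scalerDl GRing.scale1r.
  rewrite hf IH; change (gpowz (f u) (Posz k.+1)) with (gpow (f u) k * f u); reflexivity.
- have -> : ((- Posz k.+1) *: u) = (- Posz k) *: u + - u.
    by rewrite -(addn1 k) PoszD GRing.opprD GRing.scalerDl GRing.scaleN1r.
  rewrite hf IH addfN.
  have -> : (- Posz k.+1)%R = (- Posz k - 1)%R by rewrite -GRing.opprD -PoszD addn1.
  by rewrite gpowz_pred; reflexivity.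
Qed.

Lemma addf_sum k (X : nat -> rV) :
  cong N (f (\sum_(0 <= i < k) X i)) (prodg k (fun i => f (X i))).
Proof.
elim: k => [|k IH].
  by rewrite big_geq // addf0; reflexivity.
rewrite big_nat_recr // prodgS hf IH; reflexivity.
Qed.

Lemma addf_decomp u :
  cong N (f u) (prodg r'.+1 (fun i => gpowz (f (delta_mx 0 (inord i))) (u 0 (inord i)))).
Proof.
have E : u = \sum_(0 <= i < r'.+1) (u 0 (inord i) *: delta_mx 0 (inord i)).
  rewrite {1}(row_sum_delta u) big_mkord; apply: eq_bigr => j _.
  by rewrite inord_val.
rewrite {1}E addf_sum; apply: prodg_cong => i.
exact: addfZ.
Qed.
End AddDecomp.

Section AddEq.
Local Open Scope ring_scope.
Local Open Scope g_scope.
Lemma addf_eq {K : grp} (N : K -> Prop) {hN : Normal N} (r' : nat) (f g : 'rV[int]_r'.+1 -> K) :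
  addf N f -> addf N g -> (forall i, cong N (f (delta_mx 0 i)) (g (delta_mx 0 i))) ->
  forall u, cong N (f u) (g u).
Proof.
move=> hf hg h u.
rewrite (addf_decomp hf) (addf_decomp hg); apply: prodg_cong => i.
by rewrite h; reflexivity.
Qed.
End AddEq.

Lemma choice_fun {A B : Type} (P : A -> B -> Prop) : (forall x, exists y, P x y) -> exists f : A -> B, forall x, P x (f x).
Proof.
move=> h; exists (fun x => proj1_sig (constructive_indefinite_description _ (h x))).
by move=> x; exact: (proj2_sig (constructive_indefinite_description _ (h x))).
Qed.

Section Layer.
Local Open Scope ring_scope.
Local Open Scope g_scope.
Context {F G : grp} (n r' : nat) (T : seq F).
Hypothesis hT : forall i, lcs n (nth gone T i).
Hypothesis hTin : forall z, In z T -> exists i, (i < r'.+1)%N /\ nth gone T i = z.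
Hypothesis hspan : forall w : F, lcs n w -> span (lcs n.+1) T w.
Variables (alpha : F -> G) (halpha : is_hom alpha).
Hypothesis halpha_onto : forall z, lcs n z -> exists x, lcs n x /\ cong (lcs n.+1) (alpha x) z.
Variables (beta : F -> G) (hbq : qhom (lcs n.+1) beta).
Hypothesis hbc : forall x y, cong (lcs n.+1) x y <-> cong (lcs n.+1) (beta x) (beta y).
Hypothesis hbonto : forall z, lcs n z -> exists x, lcs n x /\ cong (lcs n.+1) (beta x) z.

Notation rV := 'rV[int]_r'.+1.
Definition mm i := nth gone T i.
Definition pi (u : rV) : F := prodg r'.+1 (fun i => gpowz (mm i) (u 0 (inord i))).

Lemma pi_mem u : lcs n (pi u).
Proof. by apply: prodg_mem => i; apply: gpowz_mem; apply: hT. Qed.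

Lemma pi_add : addf (lcs n.+1) pi.
Proof.
move=> u v; rewrite /pi.
rewrite (prodg_ext (G := fun i => gpowz (mm i) (u 0 (inord i)) * gpowz (mm i) (v 0 (inord i)))); last first.
  by move=> i _; rewrite mxE gpowzD.
apply: prodg_mul => i; apply: gpowz_mem; exact: hT.
Qed.

Lemma pi0 : pi 0 = gone.
Proof.
rewrite /pi (prodg_ext (G := fun _ => gone)) ?prodg_one // => i _.
by rewrite mxE.
Qed.

Lemma pi_delta i : (i < r'.+1)%N -> pi (delta_mx 0 (inord i)) = mm i.
Proof.
move=> hi; rewrite /pi (prodg_ext (G := fun j => if j == i then mm j else gone)).
  by rewrite prodg_delta hi.
move=> j hj; rewrite mxE /=.
have -> : (inord j == inord i :> 'I_r'.+1) = (j == i).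
  by rewrite -val_eqE /= !inordK.
by case: (j == i); rewrite ?gpowz1 ?gpowz0.
Qed.

Lemma pi_onto w : lcs n w -> exists u, cong (lcs n.+1) (pi u) w.
Proof.
move=> /hspan; elim=> [z [hz | hz] | | x y _ [u hu] _ [v hv] | x _ [u hu]].
- have [i [hi <-]] := hTin hz.
  by exists (delta_mx 0 (inord i)); rewrite pi_delta //; reflexivity.
- by exists 0; rewrite pi0; apply/(cong1E (N := lcs n.+1)).
- by exists 0; rewrite pi0; reflexivity.
- by exists (u + v); rewrite pi_add hu hv; reflexivity.
- by exists (- u); rewrite (addfN pi_add) hu; reflexivity.
Qed.

Lemma alpha_cong x y : cong (lcs n.+1) x y -> cong (lcs n.+1) (alpha x) (alpha y).
Proof.
rewrite /cong -(hom_inv alpha halpha) -halpha; exact: (lcs_hom alpha halpha).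
Qed.

Lemma beta_reflect x : lcs n.+1 (beta x) -> lcs n.+1 x.
Proof.
move=> hx; apply/(cong1E (N := lcs n.+1)); apply/hbc.
rewrite (qhom1 hbq); apply/(cong1E (N := lcs n.+1)); exact: hx.
Qed.

Lemma layer_inj x : lcs n x -> lcs n.+1 (alpha x) -> lcs n.+1 x.
Proof.
move=> hx hax.
have gadd : addf (lcs n.+1) (fun u => beta (pi u)).
  by move=> u v; rewrite (proj1 (hbc _ _) (pi_add u v)) hbq; reflexivity.
have aadd : addf (lcs n.+1) (fun u => alpha (pi u)).
  by move=> u v; rewrite (alpha_cong (pi_add u v)) halpha; reflexivity.
have [dd hdd] : exists dd : 'I_r'.+1 -> rV, forall j : 'I_r'.+1, cong (lcs n.+1) (alpha (mm j)) (beta (pi (dd j))).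
  apply: (@choice_fun _ _ (fun (j : 'I_r'.+1) (d : rV) => cong (lcs n.+1) (alpha (mm j)) (beta (pi d)))) => j.
  have hm : lcs n (alpha (mm j)) by apply: (lcs_hom alpha halpha); apply: hT.
  have [y [hy ey]] := hbonto hm.
  have [d hd] := pi_onto hy.
  by exists d; rewrite -ey; symmetry; apply/hbc.
pose D : 'M[int]_r'.+1 := \matrix_(j, k) dd j 0 k.
have hgD : addf (lcs n.+1) (fun u => beta (pi (u *m D))).
  by move=> u v; rewrite mulmxDl; apply: gadd.
have AD : forall u, cong (lcs n.+1) (alpha (pi u)) (beta (pi (u *m D))).
  apply: (addf_eq aadd hgD) => j.
  rewrite -rowE rowK -(inord_val j) pi_delta ?ltn_ord // inord_val; exact: hdd.
have [aa haa] : exists aa : 'I_r'.+1 -> rV, forall i : 'I_r'.+1, cong (lcs n.+1) (alpha (pi (aa i))) (beta (mm i)).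
  apply: (@choice_fun _ _ (fun (i : 'I_r'.+1) (a : rV) => cong (lcs n.+1) (alpha (pi a)) (beta (mm i)))) => i.
  have hm : lcs n (beta (mm i)).
    by apply: (qhom_lcs hbq); [move=> z /lcs_succ_sub | exact: hT].
  have [y [hy ey]] := halpha_onto hm.
  have [a ha] := pi_onto hy.
  by exists a; rewrite -ey; apply: alpha_cong.
pose A : 'M[int]_r'.+1 := \matrix_(i, k) aa i 0 k.
pose K := fun u => lcs n.+1 (pi u).
have K0 : K 0 by rewrite /K pi0; apply: N1.
have KD : forall u v, K u -> K v -> K (u + v).
  move=> u v hu hv; apply: (cong_mem (symmetry (pi_add u v))); exact: NM.
have KN : forall u, K u -> K (- u).
  move=> u hu; apply: (cong_mem (symmetry (addfN pi_add u))); exact: NV.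
have KM : forall u, K u -> K (u *m D).
  move=> u hu; apply: beta_reflect.
  apply: (cong_mem (AD u)); exact: (lcs_hom alpha halpha).
have KAD : Kmx K (1 - A *m D).
  move=> i; rewrite /K linearB /= row1 row_mul rowK.
  apply: beta_reflect; apply/(cong1E' (N := lcs n.+1)).
  rewrite (proj1 (hbc _ _) (pi_add _ _)) hbq (proj1 (hbc _ _) (addfN pi_add _)) (qhomV hbq).
  have -> : pi 'e_i = mm i by rewrite -{1}(inord_val i) pi_delta ?ltn_ord.
  rewrite -AD haa mulgV; reflexivity.
have [u hu] := pi_onto hx.
have Ku : K u.
  apply: (key_inj K0 KD KN KM KAD).
  apply: beta_reflect; apply: (cong_mem (AD u)).
  apply: (cong_mem (alpha_cong (symmetry hu))); exact: hax.
exact: (cong_mem hu Ku).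
Qed.
End Layer.

Lemma one_le k : (1 <= k.+1)%coq_nat. Proof. by apply/leP. Qed.

Lemma nth_in_or {H : grp} (T0 : seq H) i : In (nth gone T0 i) T0 \/ nth gone T0 i = gone.
Proof.
elim: T0 i => [|t T0 IH] [|i] /=; auto.
by case: (IH i) => h; auto.
Qed.

Lemma in_nth_idx {H : grp} (T0 : seq H) z : In z T0 -> exists i, i < size T0 /\ nth gone T0 i = z.
Proof.
elim: T0 => [|t T0 IH] //= [<- | hz]; first by exists 0.
by have [i [hi e]] := IH hz; exists i.+1.
Qed.

Lemma main_backward (G : grp) (hres : residually_nilpotent G) :
  (exists (n : nat) (F : grp) (b : {i : nat | (i < n)%coq_nat} -> F), is_free_basis b /\
    exists (phi : F -> G) (hphi : is_hom phi), PNi_iso (PNi_map phi hphi)) -> parafree G.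
Proof.
move=> [n [F [b [fb [phi [hphi hiso]]]]]].
have [hs hi] := levels_of_iso hiso.
split => //; exists {i : nat | (i < n)%coq_nat}, F, b; split => // j _.
exists phi; split; [|split].
- move=> x y; split => h; last exact: hi.
  rewrite /cong -(hom_inv phi hphi) -hphi; exact: (lcs_hom phi hphi).
- by move=> x y; rewrite hphi; reflexivity.
- exact: hs.
Qed.

Lemma main_forward (G : grp) (hab : abelianization_fg G) : parafree G ->
  exists (n : nat) (F : grp) (b : {i : nat | (i < n)%coq_nat} -> F), is_free_basis b /\
    exists (phi : F -> G) (hphi : is_hom phi), PNi_iso (PNi_map phi hphi).
Proof.
move=> [_ [X [F [b [fb hQ]]]]].
have Q2 := hQ 2 (one_le 1).
have [Y hY] := X_finite fb hab Q2.
have [n [b' fb']] := reindex fb hY.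
exists n, F, b'; split => //.
have [psi [hc [hq hsur]]] := Q2.
have hq' : qhom (lcs 1) psi := hq.
have [phi [hphi [hphib _]]] := fb G (fun x => psi (b x)).
exists phi, hphi.
have agree : forall x, cong (lcs 1) (phi x) (psi x).
  move=> x; elim: (basis_gen fb x) => [z [x' ->] | | u v _ hu _ hv | u _ hu].
  - by rewrite hphib; reflexivity.
  - by rewrite (hom_one phi hphi) (qhom1 hq'); reflexivity.
  - by rewrite hphi hu hv hq'; reflexivity.
  - by rewrite (hom_inv phi hphi) hu (qhomV hq'); reflexivity.
have hs : surjL phi.
  apply: (surj_up hphi) => z.
  have [x hx] := hsur z.
  by exists x; rewrite agree; exact: hx.
have hS : forall y, gen (fun z => In z (List.map b Y)) y.
  move=> y; apply: (gen_mono _ (basis_gen fb y)) => z [x ->].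
  by apply: in_map.
have key : forall k w, lcs k (phi w) -> lcs k w.
  elim=> [|k IH] w hw //.
  have hwk : lcs k w by apply: IH; apply: lcs_succ_sub.
  have [T0 [hT0 hsp0]] := layers_fg hS k.
  have [beta [hbc [hbq hbs]]] := hQ k.+2 (one_le k.+1).
  have hbq' : qhom (lcs k.+1) beta := hbq.
  have hT : forall i, lcs k (nth gone (gone :: T0) i).
    case=> [|i] /=; first exact: N1.
    by case: (nth_in_or T0 i) => [/hT0 // | ->]; apply: N1.
  have hTin : forall z, In z (gone :: T0) -> exists i, i < (size T0).+1 /\ nth gone (gone :: T0) i = z.
    move=> z /= [<- | hz]; first by exists 0.
    by have [i [hi e]] := in_nth_idx hz; exists i.+1.
  have hsp : forall w, lcs k w -> span (lcs k.+1) (gone :: T0) w.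
    move=> z /hsp0 hz; apply: (gen_mono _ hz) => z' [h | h]; [left; right | right] => //.
  have hao : forall z, lcs k z -> exists x, lcs k x /\ cong (lcs k.+1) (phi x) z.
    move=> z hz.
    have hs' : forall z, exists x, cong (lcs k.+1) (phi x) z by move=> z'; apply: hs.
    exact: (qhom_onto (hom_qhom (M := lcs k.+1) hphi) hs' hz).
  have hbo : forall z, lcs k z -> exists x, lcs k x /\ cong (lcs k.+1) (beta x) z.
    by move=> z hz; exact: (qhom_onto hbq' hbs hz).
  exact: (@layer_inj F G k (size T0) (gone :: T0) hT hTin hsp phi hphi hao beta hbq' hbc hbo w hwk hw).
apply: iso_of_levels => // k x y hxy.
apply: key; rewrite hphi (hom_inv phi hphi); exact: hxy.
Qed.

Theorem mainTheorem6 (G : grp) (hres : residually_nilpotent G) (hab : abelianization_fg G) :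
  parafree G <->
  exists (n : nat) (F : grp) (b : {i : nat | (i < n)%coq_nat} -> F), is_free_basis b /\
    exists (phi : F -> G) (hphi : is_hom phi), PNi_iso (PNi_map phi hphi).
Proof.
split; [exact: main_forward | exact: main_backward].
Qed.
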